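(* Let $q\geq 2$ be an integer and $u_0,r$ positive integers with $\gcd(u_0+r,q)=1$. Define $u_n=u_0+r[n]_q$ for $n\ge1$, where $[n]_q=\frac{q^n-1}{q-1}$. Then for all positive integers $n,m$ with $m\leq\lfloor n/2\rfloor$, \[\mathrm{lcm}(u_m,u_{m+1},\dots,u_n)\geq \gcd(u_0,r)\left(\frac{r}{\gcd(u_0,r)}\right)^{\frac n2+1}q^{\frac{n(n-2)}{4}}.\] *)

(* Defs.v *)
From mathcomp Require Import all_boot all_order all_algebra.
From mathcomp Require Import all_classical all_reals all_analysis.

(* q-integer [n]_q = (q^n - 1)/(q - 1) (exact division in nat for q >= 2) *)
Definition qint (q n : nat) : nat := (q ^ n - 1) %/ (q - 1).

Definition useq (q u0 r n : nat) : nat := u0 + r * qint q n.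

Definition lcm_range (q u0 r m n : nat) : nat :=
  \big[lcmn/1%N]_(m <= i < n.+1) useq q u0 r i.

(* Main.v *)
Require Import Defs.
From mathcomp Require Import all_boot all_order all_algebra.
From mathcomp Require Import all_classical all_reals all_analysis.
From mathcomp Require Import ring lra.
Import Order.TTheory GRing.Theory Num.Theory.
Local Set Implicit Arguments.
Local Unset Strict Implicit.

Lemma qintE q n : 2 <= q -> qint q n = \sum_(i < n) q ^ i.
Proof.
move=> q2; rewrite /qint subn1 predn_exp -subn1 mulKn //.
by rewrite subn_gt0.
Qed.

Lemma qintS q n : 2 <= q -> qint q n.+1 = qint q n + q ^ n.
Proof. by move=> q2; rewrite !qintE // big_ord_recr. Qed.

Lemma qint0 q : 2 <= q -> qint q 0 = 0.
Proof. by move=> q2; rewrite qintE // big_ord0. Qed.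

Lemma qint_add q i d : 2 <= q -> qint q (i + d) = qint q i + q ^ i * qint q d.
Proof.
move=> q2; elim: d => [|d IH]; first by rewrite addn0 qint0 // muln0 addn0.
by rewrite addnS !qintS // IH mulnDr expnD addnA.
Qed.

Lemma qint_ge q k : 2 <= q -> q ^ k <= qint q k.+1.
Proof. by move=> q2; rewrite qintS // leq_addl. Qed.

Lemma qint_gt0 q k : 2 <= q -> 0 < qint q k.+1.
Proof. by move=> q2; apply: leq_trans (qint_ge _ q2); rewrite expn_gt0 (leq_trans _ q2). Qed.

Lemma qint1 q : 2 <= q -> qint q 1 = 1.
Proof. by move=> q2; rewrite qintS // qint0. Qed.

Lemma qintS' q n : 2 <= q -> qint q n.+1 = 1 + q * qint q n.
Proof. by move=> q2; rewrite -add1n qint_add // expn1 qint1. Qed.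

Lemma count_bound (P Q : pred nat) n : forall j m, j = n - m -> m <= n ->
  (forall i k, m <= i -> i < k -> k <= n -> P i -> P k -> Q (k - i)) ->
  \sum_(m <= k < n.+1) P k <= 1 + \sum_(1 <= d < j.+1) Q d.
Proof.
elim=> [|j IH] m hj mn H.
  have -> : m = n by apply/eqP; rewrite eqn_leq mn -subn_eq0 -hj.
  by rewrite big_nat1; case: (P n).
have mn' : m < n by rewrite -subn_gt0 -hj.
rewrite big_ltn ?ltnS //.
case Pm: (P m) => /=.
  rewrite add1n ltnS -add1n big_addn.
  have -> : n.+1 - m = j.+2 by rewrite subSn ?hj // ltnW.
  rewrite big_nat_cond [X in _ <= X]big_nat_cond.
  apply: leq_sum => d /andP [/andP [d1 dlt] _].
  case Pd: (P (d + m)) => //.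
  have := H m (d + m) (leqnn _) _ _ Pm Pd.
  rewrite addnK => -> //; first by rewrite -{1}[m]add0n ltn_add2r.
  move: dlt; rewrite ltnS => dlt; rewrite -(leq_add2r m) in dlt.
  by apply: leq_trans dlt _; rewrite hj subnK // ltnW.
rewrite add0n.
apply: leq_trans (IH m.+1 _ mn' _) _.
- by rewrite subnS -hj.
- by move=> i k mi; apply: H; apply: ltnW.
by rewrite leq_add2l [X in _ <= X]big_nat_recr //= leq_addr.
Qed.

Lemma dvd_biglcm_seq (r : seq nat) (F : nat -> nat) k :
  k \in r -> F k %| \big[lcmn/1]_(i <- r) F i.
Proof.
elim: r => //= x r IH; rewrite inE big_cons => /orP [/eqP -> | /IH h].
  exact: dvdn_lcml.
exact: dvdn_trans h (dvdn_lcmr _ _).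
Qed.

Lemma dvd_bigprod_seq (r : seq nat) (F : nat -> nat) k :
  k \in r -> F k %| \prod_(i <- r) F i.
Proof.
elim: r => //= x r IH; rewrite inE big_cons => /orP [/eqP -> | /IH h].
  exact: dvdn_mulr.
exact: dvdn_trans h (dvdn_mull _ _).
Qed.

Lemma biglcm_gt0 (r : seq nat) (F : nat -> nat) :
  (forall i, i \in r -> 0 < F i) -> 0 < \big[lcmn/1]_(i <- r) F i.
Proof.
elim: r => [|x r IH] H; first by rewrite big_nil.
rewrite big_cons lcmn_gt0 H ?inE ?eqxx //= IH // => i ir.
by apply: H; rewrite inE ir orbT.
Qed.

Lemma bigprod_gt0 (r : seq nat) (F : nat -> nat) :
  (forall i, i \in r -> 0 < F i) -> 0 < \prod_(i <- r) F i.
Proof.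
elim: r => [|x r IH] H; first by rewrite big_nil.
rewrite big_cons muln_gt0 H ?inE ?eqxx //= IH // => i ir.
by apply: H; rewrite inE ir orbT.
Qed.

Lemma logn_prod p (r : seq nat) (F : nat -> nat) :
  (forall i, i \in r -> 0 < F i) ->
  logn p (\prod_(i <- r) F i) = \sum_(i <- r) logn p (F i).
Proof.
elim: r => [|x r IH] H; first by rewrite !big_nil logn1.
have H' : forall i, i \in r -> 0 < F i by move=> i ir; apply: H; rewrite inE ir orbT.
rewrite !big_cons lognM ?IH ?H ?inE ?eqxx //.
exact: bigprod_gt0.
Qed.

Lemma logn_cnt p x B : prime p -> 0 < x -> x <= B ->
  logn p x = \sum_(1 <= e < B) (p ^ e %| x).
Proof.
move=> pp x0 xB; rewrite logn_count_dvd // (@big_cat_nat _ _ _ x 1 B _ _ x0 xB) /=.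
rewrite [X in _ = _ + X]big1_seq ?addn0 // => e /andP [_].
rewrite mem_index_iota => /andP [xe _].
suff -> : (p ^ e %| x) = false by [].
apply/negbTE/negP => /(dvdn_leq x0); apply/negP; rewrite -ltnNge.
exact: leq_ltn_trans xe (ltn_expl _ (prime_gt1 pp)).
Qed.

Lemma main_dvd (v Q : nat -> nat) m n : m <= n ->
  (forall k, 0 < v k) -> (forall d, 0 < d -> 0 < Q d) ->
  (forall i k c, m <= i -> i < k -> c %| v i -> c %| v k -> c %| Q (k - i)) ->
  \prod_(m <= k < n.+1) v k %|
    \big[lcmn/1]_(m <= k < n.+1) v k * \prod_(1 <= d < (n - m).+1) Q d.
Proof.
move=> mn vpos Qpos Hd.
set L := \big[lcmn/1]_(m <= k < n.+1) v k.
set D := \prod_(1 <= d < (n - m).+1) Q d.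
have L0 : 0 < L by apply: biglcm_gt0.
have D0 : 0 < D by apply: bigprod_gt0 => d; rewrite mem_index_iota => /andP [d1 _]; apply: Qpos.
have LD0 : 0 < L * D by rewrite muln_gt0 L0.
have X0 : 0 < \prod_(m <= k < n.+1) v k by apply: bigprod_gt0.
apply/dvdn_partP => // p; rewrite mem_primes => /andP [pp _].
rewrite p_part pfactor_dvdn //.
set B := L * D.
have vB : forall k, k \in index_iota m n.+1 -> v k <= B.
  move=> k kr; apply: leq_trans (leq_pmulr _ D0).
  exact: dvdn_leq L0 (dvd_biglcm_seq _ kr).
have QB : forall d, d \in index_iota 1 (n - m).+1 -> Q d <= B.
  move=> d dr; apply: leq_trans (leq_pmull _ L0).
  exact: dvdn_leq D0 (dvd_bigprod_seq _ dr).
rewrite logn_prod // lognM // logn_prod; last first.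
  by move=> d; rewrite mem_index_iota => /andP [d1 _]; apply: Qpos.
rewrite (logn_cnt pp L0 (leq_pmulr _ D0)).
rewrite (eq_big_seq (fun k => \sum_(1 <= e < B) (p ^ e %| v k))); last first.
  by move=> k kr; rewrite (logn_cnt pp (vpos k) (vB k kr)).
rewrite [X in _ <= _ + X](eq_big_seq (fun d => \sum_(1 <= e < B) (p ^ e %| Q d))); last first.
  move=> d dr; rewrite (logn_cnt pp _ (QB d dr)) //.
  by move: dr; rewrite mem_index_iota => /andP [d1 _]; apply: Qpos.
rewrite exchange_big [X in _ <= _ + X]exchange_big -big_split /=.
apply: leq_sum => e _.
case pL: (p ^ e %| L).
  apply: (@count_bound (fun k => p ^ e %| v k) (fun d => p ^ e %| Q d) n (n - m) m) => //.
  by move=> i k mi ik _; apply: Hd.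
rewrite big1_seq // => k /andP [_ kr].
suff -> : (p ^ e %| v k) = false by [].
apply/negbTE/negP => pv; move/negbT: pL => /negP; apply.
exact: dvdn_trans pv (dvd_biglcm_seq _ kr).
Qed.
Lemma prod_bound (v : nat -> nat) q b m N : 2 <= q -> 0 < m ->
  (forall k, b * qint q k <= v k) ->
  b ^ N.+1 * q ^ (m.-1 + m * N) * \prod_(1 <= d < N.+1) qint q d
    <= \prod_(m <= k < (m + N).+1) v k.
Proof.
move=> q2 m0 Hv; elim: N => [|N IH].
  rewrite addn0 muln0 addn0 big_nat1 big_geq // muln1 expn1.
  apply: leq_trans (Hv m); rewrite leq_mul2l; apply/orP; right.
  by rewrite -{2}(prednK m0) qint_ge.
rewrite big_nat_recr //= [X in _ <= X]big_nat_recr ?leq_addr //=.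
have -> : b ^ N.+2 * q ^ (m.-1 + m * N.+1) * (\prod_(1 <= i < N.+1) qint q i * qint q N.+1)
  = (b ^ N.+1 * q ^ (m.-1 + m * N) * \prod_(1 <= i < N.+1) qint q i) * (b * q ^ m * qint q N.+1).
  rewrite mulnS addnCA addnC expnD expnS.
  ring.
apply: leq_mul; first by rewrite addnS.
apply: leq_trans (Hv (m + N.+1)).
by rewrite qint_add // -mulnA leq_mul2l leq_addl orbT.
Qed.

Lemma lcm_dvd_seq (r : seq nat) (F : nat -> nat) d :
  (forall i, i \in r -> F i %| d) -> \big[lcmn/1]_(i <- r) F i %| d.
Proof.
elim: r => [|x r IH] H; first by rewrite big_nil dvd1n.
rewrite big_cons dvdn_lcm H ?inE ?eqxx //= IH // => i ir.
by apply: H; rewrite inE ir orbT.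
Qed.

Lemma nat_main (q u0 r n m : nat) :
  2 <= q -> 0 < u0 -> 0 < r -> coprime (u0 + r) q ->
  0 < m -> m <= n./2 ->
  gcdn u0 r * ((r %/ gcdn u0 r) ^ (n - n./2).+1 * q ^ ((n./2).-1 + n./2 * (n - n./2)))
    <= lcm_range q u0 r m n.
Proof.
move=> q2 u00 r0 cop m0 mn2.
set g := gcdn u0 r; set a := u0 %/ g; set b := (r %/ g)%N; set s := n./2.
have g0 : 0 < g by rewrite gcdn_gt0 u00.
have ua : u0 = a * g by rewrite divnK // dvdn_gcdl.
have rb : r = b * g by rewrite divnK // dvdn_gcdr.
have cab : coprime a b.
  apply/eqP; apply/eqP; rewrite -(eqn_pmul2r g0) mul1n muln_gcdl -ua -rb.
  done.
set v := fun k => a + b * qint q k.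
have uv : forall k, useq q u0 r k = g * v k.
  by move=> k; rewrite /useq /v ua rb; ring.
have a0 : 0 < a by rewrite ua muln_gt0 in u00; case/andP: u00.
have vpos : forall k, 0 < v k by move=> k; rewrite /v addn_gt0 a0.
have s1 : 1 <= s by apply: leq_trans mn2.
have sn : s <= n by rewrite /s -{2}(odd_double_half n) -addnn addnA leq_addl.
have cvb : forall k, coprime (v k) b.
  by move=> k; rewrite /v coprime_sym mulnC addnC /coprime gcdnMDl -/(coprime b a) coprime_sym.
have cvq : forall k, 1 <= k -> coprime (v k) q.
  move=> k k1; have e : g * v k = (u0 + r) + q * (r * qint q k.-1).
    by rewrite -uv /useq -{1}(prednK k1) qintS' //; ring.
  have : coprime (g * v k) q.
    by rewrite e coprime_sym [_ + q * _]addnC [q * _]mulnC /coprime gcdnMDl -/(coprime q (u0 + r)) coprime_sym.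
  by rewrite coprimeMl => /andP [].
set L := \big[lcmn/1]_(s <= k < n.+1) v k.
set D := \prod_(1 <= d < (n - s).+1) qint q d.
have D0 : 0 < D.
  by apply: bigprod_gt0 => d; rewrite mem_index_iota => /andP [d1 _]; rewrite -(prednK d1) qint_gt0.
have XLD : \prod_(s <= k < n.+1) v k <= L * D.
  apply: dvdn_leq; first by rewrite muln_gt0 D0 andbT biglcm_gt0.
  apply: main_dvd => //.
    by move=> d d1; rewrite -(prednK d1) qint_gt0.
  move=> i k c si ik ci ck.
  have ek : v k = v i + b * q ^ i * qint q (k - i).
    by rewrite /v -{1}(subnKC (ltnW ik)) qint_add // mulnDr -addnA mulnA.
  rewrite ek dvdn_addr // in ck.
  rewrite Gauss_dvdr // in ck.
  apply: (coprime_dvdl ci).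
  by rewrite coprimeMr cvb coprimeXr // cvq // (leq_trans s1 si).
have XB := @prod_bound v q b s (n - s) q2 s1 (fun k => leq_addl _ _).
rewrite subnKC // in XB.
have LB : b ^ (n - s).+1 * q ^ (s.-1 + s * (n - s)) <= L.
  by rewrite -(leq_pmul2r D0); apply: leq_trans XB XLD.
apply: leq_trans (leq_mul (leqnn g) LB) _.
set M := lcm_range q u0 r m n.
have gM : g %| M.
  apply: dvdn_trans (dvdn_mulr (v n) (dvdnn g)) _; rewrite -uv.
  apply: dvd_biglcm_seq; rewrite mem_index_iota ltnS leqnn andbT.
  exact: leq_trans mn2 sn.
have M0 : 0 < M by apply: biglcm_gt0 => k _; rewrite /useq addn_gt0 u00.
apply: dvdn_leq => //.
rewrite -(divnK gM) [_ %/ g * g]mulnC dvdn_pmul2l //.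
apply: lcm_dvd_seq => k kr.
rewrite -(dvdn_pmul2l g0) [g * (_ %/ _)]mulnC divnK // -uv; apply: dvd_biglcm_seq.
move: kr; rewrite !mem_index_iota => /andP [sk ->]; rewrite andbT.
exact: leq_trans mn2 sk.
Qed.

Local Open Scope ring_scope.
Lemma ex1 (R : realType) (s : nat) (o : bool) : (1 <= s)%N ->
  (((s + s + o)%N)%:R / 2 + 1 <= (((s + s + o) - s).+1)%N%:R :> R) /\
  (((s + s + o)%N)%:R * (((s + s + o)%N)%:R - 2) / 4
     <= (s.-1 + s * ((s + s + o) - s))%N%:R :> R).
Proof.
move=> s1; rewrite -addnA addKn -subn1 -[(s + o).+1]addn1.
have hs : (1 : R) <= s%:R by rewrite ler1n.
have e1 : ((nat_of_bool true)%:R : R) = 1 by [].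
have e0 : ((nat_of_bool false)%:R : R) = 0 by [].
case: o; rewrite !(natrD, natrM, natrB) // ?e1 ?e0; split; nra.


Qed.

Local Unset Implicit Arguments.

Theorem theorem4 (R : realType) (q u0 r : nat) :
  (2 <= q)%N -> (0 < u0)%N -> (0 < r)%N -> coprime (u0 + r) q ->
  forall n m : nat, (0 < n)%N -> (0 < m)%N -> (m <= n./2)%N ->
  (gcdn u0 r)%:R * (((r%:R / (gcdn u0 r)%:R) : R) `^ (n%:R / 2 + 1))
    * ((q%:R : R) `^ ((n%:R * (n%:R - 2)) / 4))
  <= (lcm_range q u0 r m n)%:R.
Proof.
move=> q2 u00 r0 cop n m n0 m0 mn2.
have := nat_main q2 u00 r0 cop m0 mn2.
set g := gcdn u0 r; set b := (r %/ g)%N; set s := n./2.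
have g0 : (0 < g)%N by rewrite gcdn_gt0 u00.
have rb : r = (b * g)%N by rewrite divnK // dvdn_gcdr.
have b0 : (0 < b)%N by move: r0; rewrite rb muln_gt0 => /andP [].
have s1 : (1 <= s)%N by apply: leq_trans mn2.
have en : n = (s + s + odd n)%N by rewrite addnn addnC /s odd_double_half.
have [E1 E2] := ex1 R (odd n) s1.
rewrite -en in E1 E2.
move=> H.
apply: le_trans (_ : (g * (b ^ (n - s).+1 * q ^ (s.-1 + s * (n - s))))%:R <= _); last by rewrite ler_nat.
rewrite (_ : r%:R / g%:R = b%:R); last by rewrite rb natrM mulfK // pnatr_eq0 -lt0n.
rewrite natrM -mulrA ler_pM2l ?ltr0n // natrM !natrX.
apply: ler_pM; [exact: powR_ge0 | exact: powR_ge0 | |].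
  rewrite -powR_mulrn ?ler0n //; apply: ler_powR => //; by rewrite ler1n.
rewrite -powR_mulrn ?ler0n //; apply: ler_powR => //; by rewrite ler1n; exact: ltnW.
Qed.
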